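(* Every triple in $V(\mathfrak{B})$ is a permutation of one of the following six triples, for some distinct $u,v,w\in U(\mathfrak{B})$. (i) $\langle u,v,w\rangle$ where $\{\langle u,v\rangle,\langle u,w\rangle\}=\Xi(u)$ and $\langle v,w\rangle$ is a $\Xi$-pair, (ii) $\langle u,v,w\rangle$ where $\{\langle u,v\rangle,\langle u,w\rangle\}=\Xi(u)$, and $\langle v,w\rangle$ is a base-pair, (iii) $\langle u,v,w\rangle$ where $\langle u,v\rangle$, $\langle u,w\rangle$, and $\langle v,w\rangle$ are base-pairs, (iv) $\langle u,u,v\rangle$ where $\langle u,v\rangle$ is a $\Xi$-pair, (v) $\langle u,u,v\rangle$ where $\langle u,v\rangle$ is a base-pair, (vi) $\langle u,u,u\rangle$.
   Context: Let $\mathfrak{A}=\langle A,+,\overline{\phantom{x}},;,\breve{\phantom{x}},1'\rangle$ be a complete atomic weakly associative relation algebra with set of atoms $\mathsf{At}\,\mathfrak{A}$, and let $0'=\overline{1'}$. Its suitable structure is $\mathfrak{B}=\langle B,T_\kappa,E_{\kappa\lambda}\rangle_{\kappa,\lambda<3}$, where $B=\{s\in{}^3\mathsf{At}\,\mathfrak{A}: s_2;s_0\geq s_1\}$, $T_\kappa=\{\langle s,t\rangle: s_\kappa=t_\kappa\}$, $E_{\kappa\kappa}=B$, and $E_{\kappa\lambda}=E_{\lambda\kappa}=\{s\in B: s_\mu\leq 1'\}$ whenever $\{\kappa,\lambda,\mu\}=\{0,1,2\}$. $\mathrm{Tr}(\mathfrak{B})$ is the set of all sequences (trails) $p=\langle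 t_0,\kappa_0,\dots,t_n,\kappa_n\rangle$ with $n\in\omega$, $t_0,\dots,t_n\in B$, $\kappa_0,\dots,\kappa_n<3$, and $t_i\neq t_{i+1}$, $t_i\,T_{\kappa_i}\,t_{i+1}$ for all $i<n$; $\kappa_n$ is the pointer of $p$ and $|p|=n+1$ its length. For $\lambda<3$, $p\lambda=\langle t_0,\kappa_0,\dots,t_{n-1},\kappa_{n-1},t_n,\lambda\rangle$. $p$ is reduced if: (a) if $|p|=1$ and $t_0\in E_{\kappa_0\lambda}$ then $\kappa_0\leq\lambda<3$; (b) if $|p|>1$ then $\kappa_{n-1}=\kappa_n$ and for all $\lambda<3$, $t_n\in E_{\kappa_n\lambda}$ iff $\kappa_n=\lambda$; (c) if $0\leq i<|p|-2$ then $t_i\neq t_{i+2}$ or $\kappa_i\neq\kappa_{i+1}$. $\approx$ is the smallest equivalence relation on $\mathrm{Tr}(\mathfrak{B})$ such that (1) $\langle t_0,\kappa_0,\dots,t_i,\lambda,s,\lambda,t_i,\kappa_i,\dots,t_n,\kappa_n\rangle\approx\langle t_0,\kappa_0,\dots,t_i,\kappa_i,\dots,t_n,\kappa_n\rangle$; (2) $\langle t_0,\kappa_0,\dots,t_n,\lambda,s,\kappa_n\rangle\approx\langle t_0,\kappa_0,\dots,t_n,\kappa_n\rangle$ where $\lambda\neq\kappa_n$; (3) $\langle t_0,\kappa_0,\dots,t_n,\lambda\rangle\approx\langle t_0,\kappa_0,\dots,t_n,\kappa_n\rangle$ where $t_n\in E_{\lambda\kappa_n}$. $p^{\mathfrak{B}}$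 is the $\approx$-class of $p$; each class contains a unique reduced trail. $U(\mathfrak{B})=\{p^{\mathfrak{B}}:p\in\mathrm{Tr}(\mathfrak{B})\}$, and for $u\in U(\mathfrak{B})$, $|u|$ is the length of the unique reduced trail in $u$. $V(\mathfrak{B})=\{\langle (p0)^{\mathfrak{B}},(p1)^{\mathfrak{B}},(p2)^{\mathfrak{B}}\rangle: p\in\mathrm{Tr}(\mathfrak{B})\}$ (the triples of trails). For $u\in U(\mathfrak{B})$: if $|u|=1$ then $\Xi(u)=\emptyset$; if $|u|>1$ then $\Xi(u)=\{\langle u,(p\lambda)^{\mathfrak{B}}\rangle,\langle u,(p\mu)^{\mathfrak{B}}\rangle\}$ where $p$ is the unique reduced trail in $u$, $\kappa$ is the pointer of $p$, and $\{\kappa,\lambda,\mu\}=\{0,1,2\}$. A pair $\langle u,v\rangle$ of points is a $\Xi$-pair if $\langle u,v\rangle\in\Xi(u)$ or $\langle v,u\rangle\in\Xi(v)$, and a base-pair if it belongs to $\{\langle (\langle t,\kappa\rangle)^{\mathfrak{B}},(\langle t,\lambda\rangle)^{\mathfrak{B}}\rangle: t\in B,\ t_\mu\leq 0',\ \{\kappa,\lambda,\mu\}=\{0,1,2\}\}$. *)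

(* Defs.v *)
From Stdlib Require Import List Arith Relations.
Import ListNotations.

(** * Weakly associative relation algebras (Maddux):
    Tarski's axioms R1-R3, R5-R10 (i.e. all RA axioms except associativity
    of ;) plus the weak associativity law ((1'.x);1);1 = (1'.x);1. *)
Record WA := {
  car :> Type;
  jn : car -> car -> car;
  cm : car -> car;
  cp : car -> car -> car;
  cv : car -> car;
  id' : car;
  wa_R1 : forall x y, jn x y = jn y x;
  wa_R2 : forall x y z, jn x (jn y z) = jn (jn x y) z;
  wa_R3 : forall x y, jn (cm (jn (cm x) y)) (cm (jn (cm x) (cm y))) = x;
  wa_R5 : forall x y z, cp (jn x y) z = jn (cp x z) (cp y z);
  wa_R6 : forall x, cp x id' = x;
  wa_R7 : forall x, cv (cv x) = x;
  wa_R8 : forall x y, cv (jn x y) = jn (cv x) (cv y);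
  wa_R9 : forall x y, cv (cp x y) = cp (cv y) (cv x);
  wa_R10 : forall x y, jn (cp (cv x) (cm (cp x y))) (cm y) = cm y;
  wa_WA : forall x,
    cp (cp (cm (jn (cm id') (cm x))) (jn id' (cm id'))) (jn id' (cm id'))
    = cp (cm (jn (cm id') (cm x))) (jn id' (cm id'))
}.

Arguments jn {w}.
Arguments cm {w}.
Arguments cp {w}.
Arguments cv {w}.
Arguments id' {w}.

Definition le {R : WA} (x y : R) : Prop := jn x y = y.
Definition top {R : WA} : R := jn id' (cm id').
Definition bot {R : WA} : R := cm top.
Definition diff' {R : WA} : R := cm id'.

Definition is_atom {R : WA} (a : R) : Prop :=
  a <> bot /\ forall x, le x a -> x = bot \/ x = a.

Definition complete {R : WA} : Prop :=
  forall S : R -> Prop, exists j : R,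
    (forall x, S x -> le x j) /\ (forall y, (forall x, S x -> le x y) -> le j y).

Definition atomic {R : WA} : Prop :=
  forall x : R, x <> bot -> exists a, is_atom a /\ le a x.

Record CAWA := { wa_of :> WA; cawa_complete : @complete wa_of;
                 cawa_atomic : @atomic wa_of }.

Inductive I3 := i0 | i1 | i2.
Definition I3_to_nat (k : I3) : nat := match k with i0 => 0 | i1 => 1 | i2 => 2 end.
Definition third (k l : I3) : I3 :=
  match k, l with
  | i0, i1 | i1, i0 => i2
  | i0, i2 | i2, i0 => i1
  | i1, i2 | i2, i1 => i0
  | _, _ => k
  end.

Definition inB {R : WA} (s : I3 -> R) : Prop :=
  (forall k, is_atom (s k)) /\ le (s i1) (cp (s i2) (s i0)).

Definition Trel {R : WA} (k : I3) (s t : I3 -> R) : Prop := s k = t k.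

Definition Erel {R : WA} (k l : I3) (s : I3 -> R) : Prop :=
  inB s /\ (k = l \/ (k <> l /\ le (s (third k l)) id')).

(** * Trails, represented as nonempty lists of (t_i, kappa_i) *)
Definition trail (R : WA) := list ((I3 -> R) * I3).

Definition dflt {R : WA} : (I3 -> R) * I3 := (fun _ => id', i0).
Definition tr {R : WA} (p : trail R) (i : nat) : I3 -> R := fst (nth i p dflt).
Definition pt {R : WA} (p : trail R) (i : nat) : I3 := snd (nth i p dflt).

Definition is_trail {R : WA} (p : trail R) : Prop :=
  p <> [] /\
  (forall i, i < length p -> inB (tr p i)) /\
  (forall i, S i < length p ->
     tr p i <> tr p (S i) /\ Trel (pt p i) (tr p i) (tr p (S i))).

Definition pointer {R : WA} (p : trail R) : I3 := pt p (pred (length p)).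

Fixpoint setptr {R : WA} (p : trail R) (l : I3) : trail R :=
  match p with
  | [] => []
  | [(t, _)] => [(t, l)]
  | x :: r => x :: setptr r l
  end.

Definition reduced {R : WA} (p : trail R) : Prop :=
  is_trail p /\
  (length p = 1 -> forall l, Erel (pt p 0) l (tr p 0) ->
       I3_to_nat (pt p 0) <= I3_to_nat l) /\
  (length p > 1 ->
     pt p (length p - 2) = pt p (length p - 1) /\
     forall l, Erel (pt p (length p - 1)) l (tr p (length p - 1)) <->
               pt p (length p - 1) = l) /\
  (forall i, i + 2 < length p -> tr p i <> tr p (i + 2) \/ pt p i <> pt p (i + 1)).

Inductive step {R : WA} : trail R -> trail R -> Prop :=
  | step1 : forall pre post t k l s,
      step (pre ++ [(t, l); (s, l); (t, k)] ++ post) (pre ++ [(t, k)] ++ post)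
  | step2 : forall pre t l s k, l <> k ->
      step (pre ++ [(t, l); (s, k)]) (pre ++ [(t, k)])
  | step3 : forall pre t l k, Erel l k t ->
      step (pre ++ [(t, l)]) (pre ++ [(t, k)]).

Definition tstep {R : WA} (p q : trail R) : Prop :=
  is_trail p /\ is_trail q /\ step p q.

Definition approx {R : WA} (p q : trail R) : Prop :=
  is_trail p /\ is_trail q /\ clos_refl_sym_trans _ tstep p q.

(** points: ~-classes, represented as predicates on trails *)
Definition point (R : WA) := trail R -> Prop.
Definition cls {R : WA} (p : trail R) : point R := fun q => approx p q.

Definition inU {R : WA} (u : point R) : Prop := exists p, is_trail p /\ u = cls p.

Definition inV {R : WA} (x : point R * point R * point R) : Prop :=
  exists p, is_trail p /\
    x = (cls (setptr p i0), cls (setptr p i1), cls (setptr p i2)).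

Definition inXi {R : WA} (u : point R) (x y : point R) : Prop :=
  exists p, reduced p /\ u = cls p /\ length p > 1 /\ x = u /\
    exists l, l <> pointer p /\ y = cls (setptr p l).

Definition Xi_pair {R : WA} (u v : point R) : Prop := inXi u u v \/ inXi v v u.

Definition base_pair {R : WA} (u v : point R) : Prop :=
  exists (t : I3 -> R) (k l : I3), inB t /\ k <> l /\
    le (t (third k l)) diff' /\ u = cls [(t, k)] /\ v = cls [(t, l)].

Definition Xi_is {R : WA} (u v w : point R) : Prop :=
  forall x y, inXi u x y <-> ((x = u /\ y = v) \/ (x = u /\ y = w)).

Definition perm3 {T : Type} (x : T * T * T) (a b c : T) : Prop :=
  x = (a, b, c) \/ x = (a, c, b) \/ x = (b, a, c) \/
  x = (b, c, a) \/ x = (c, a, b) \/ x = (c, b, a).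

(* Main.v *)
Require Import Defs.
From Stdlib Require Import List.

Section Alg.
Variable W : WA.
Local Notation "x ⊕ y" := (@jn W x y) (at level 50, left associativity).
Local Notation "! x" := (@cm W x) (at level 35, right associativity).

Lemma jC (x y : W) : x ⊕ y = y ⊕ x. Proof. apply wa_R1. Qed.
Lemma jA (x y z : W) : x ⊕ (y ⊕ z) = x ⊕ y ⊕ z. Proof. apply wa_R2. Qed.
Lemma jS (x y z : W) : x ⊕ (y ⊕ z) = y ⊕ (x ⊕ z).
Proof. rewrite !jA, (jC x y). reflexivity. Qed.
Lemma H (x y : W) : !(!x ⊕ y) ⊕ !(!x ⊕ !y) = x. Proof. apply wa_R3. Qed.

Lemma L1 (x : W) : x ⊕ !x = !x ⊕ !!x.
Proof.
  transitivity ((!(!x ⊕ !!x) ⊕ !(!x ⊕ !!!x)) ⊕ (!(!!x ⊕ !!x) ⊕ !(!!x ⊕ !!!x))).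
  { rewrite !H. reflexivity. }
  transitivity ((!(!!x ⊕ !x) ⊕ !(!!x ⊕ !!x)) ⊕ (!(!!!x ⊕ !x) ⊕ !(!!!x ⊕ !!x))).
  2:{ rewrite !H. reflexivity. }
  rewrite (jC (!!x) (!x)), (jC (!!!x) (!x)), (jC (!!!x) (!!x)).
  rewrite !jA. f_equal. rewrite <- !jA. f_equal. apply jC.
Qed.

Lemma L2 (x : W) : !!x = x.
Proof.
  transitivity (!(!!!x ⊕ !x) ⊕ !(!!!x ⊕ !!x)). { symmetry; apply H. }
  transitivity (!(!x ⊕ !!x) ⊕ !(!x ⊕ !!!x)). 2:{ apply H. }
  rewrite (jC (!!!x) (!!x)), (jC (!!!x) (!x)). rewrite <- (L1 (!x)). apply jC.
Qed.

Lemma L3 (x y : W) : x ⊕ !x = y ⊕ !y.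
Proof.
  transitivity ((!(!x ⊕ y) ⊕ !(!x ⊕ !y)) ⊕ (!(!!x ⊕ y) ⊕ !(!!x ⊕ !y))).
  { rewrite !H. reflexivity. }
  transitivity ((!(!y ⊕ x) ⊕ !(!y ⊕ !x)) ⊕ (!(!!y ⊕ x) ⊕ !(!!y ⊕ !x))).
  2:{ rewrite !H. reflexivity. }
  rewrite !L2.
  rewrite (jC (!x) y), (jC (!x) (!y)), (jC x y), (jC x (!y)).
  set (a := !(y ⊕ !x)). set (b := !(!y ⊕ !x)). set (c := !(y ⊕ x)). set (d := !(!y ⊕ x)).
  rewrite <- !jA. rewrite (jC c d), (jS b d), (jS a d). f_equal.
  rewrite (jC c a), (jS b a). reflexivity.
Qed.

Lemma one_eq (x : W) : x ⊕ !x = top. Proof. apply L3. Qed.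
Lemma ncm_top : !(@top W) = bot. Proof. reflexivity. Qed.
Lemma n_bot : !(@bot W) = top. Proof. apply L2. Qed.

Lemma K1 (x : W) : x = bot ⊕ !(!x ⊕ !x).
Proof. rewrite <- (H x x) at 1. rewrite (jC (!x) x), one_eq. reflexivity. Qed.

Lemma top_bot : (@top W) ⊕ bot = top.
Proof. unfold bot. apply one_eq. Qed.
Lemma bot_top : (@bot W) ⊕ top = top.
Proof. rewrite jC; apply top_bot. Qed.

Lemma P1 : !((@top W) ⊕ top) ⊕ top = top.
Proof.
  assert (E0 : (@bot W) = bot ⊕ !(top ⊕ top)).
  { rewrite (K1 bot) at 1. rewrite n_bot. reflexivity. }
  transitivity (!((@top W) ⊕ top) ⊕ (bot ⊕ top)). { rewrite bot_top; reflexivity. }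
  rewrite jA, (jC _ bot), <- E0. apply bot_top.
Qed.

Lemma top_top : (@top W) ⊕ top = top.
Proof.
  pose proof (one_eq (top ⊕ top)) as E. rewrite <- jA in E.
  rewrite (jC top (!(top ⊕ top))) in E. rewrite P1 in E. exact E.
Qed.

Lemma bot_bot : (@bot W) ⊕ bot = bot.
Proof.
  rewrite (K1 bot) at 3. rewrite n_bot, top_top. reflexivity.
Qed.

Lemma j_bot (x : W) : x ⊕ bot = x.
Proof.
  rewrite (K1 x) at 1. rewrite (jC bot), <- jA, bot_bot. rewrite jC. symmetry; apply K1.
Qed.
Lemma bot_j (x : W) : bot ⊕ x = x. Proof. rewrite jC; apply j_bot. Qed.

Lemma jj (x : W) : x ⊕ x = x.
Proof.
  assert (E : forall y : W, y = !(!y ⊕ !y)).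
  { intro y. rewrite (K1 y) at 1. apply bot_j. }
  assert (E1 : !x = !(x ⊕ x)). { rewrite (E (!x)) at 1. rewrite !L2. reflexivity. }
  rewrite <- (L2 (x ⊕ x)), <- E1. apply L2.
Qed.

Lemma j_top (x : W) : x ⊕ top = top.
Proof. rewrite <- (one_eq x). rewrite jA, jj. reflexivity. Qed.

Lemma le_refl (x : W) : le x x. Proof. apply jj. Qed.
Lemma le_trans (x y z : W) : le x y -> le y z -> le x z.
Proof. unfold le; intros A B. rewrite <- B, jA, A. reflexivity. Qed.
Lemma le_antisym (x y : W) : le x y -> le y x -> x = y.
Proof. unfold le; intros A B. rewrite <- A, <- B at 1. apply jC. Qed.
Lemma le_bot (x : W) : le bot x. Proof. apply bot_j. Qed.
Lemma le_jl (x y : W) : le x (x ⊕ y). Proof. unfold le. rewrite jA, jj. reflexivity. Qed.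

Definition mt (x y : W) := !(!x ⊕ !y).
Lemma mt_C (x y : W) : mt x y = mt y x. Proof. unfold mt; rewrite jC; reflexivity. Qed.
Lemma H2 (x y : W) : mt x (!y) ⊕ mt x y = x.
Proof. unfold mt. rewrite L2. apply H. Qed.
Lemma mt_le_l (x y : W) : le (mt x y) x.
Proof.
  unfold le. rewrite <- (H2 x y) at 2. rewrite (jC (mt x (!y))), jA, jj. rewrite jC. apply H2.
Qed.
Lemma mt_le_r (x y : W) : le (mt x y) y.
Proof. rewrite mt_C. apply mt_le_l. Qed.

Lemma atom_split (a x : W) : is_atom a -> le a x \/ le a (!x).
Proof.
  intros [Hne Ha].
  destruct (Ha (mt a x) (mt_le_l a x)) as [E|E].
  - right. rewrite <- (H2 a x). rewrite E, j_bot. apply mt_le_r.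
  - left. rewrite <- E. apply mt_le_r.
Qed.

Lemma le_compl_bot (a : W) : le a (!a) -> a = bot.
Proof.
  unfold le; intro E. rewrite one_eq in E.
  rewrite <- (L2 a), <- E. reflexivity.
Qed.

Local Notation "x ; y" := (@cp W x y) (at level 40, left associativity).
Local Notation "x ^~" := (@cv W x) (at level 30).

Lemma cp_mono_l (x y z : W) : le x y -> le (x;z) (y;z).
Proof. unfold le; intro E. rewrite <- wa_R5, E. reflexivity. Qed.
Lemma cv_mono (x y : W) : le x y -> le (x^~) (y^~).
Proof. unfold le; intro E. rewrite <- wa_R8, E. reflexivity. Qed.
Lemma cv_cv (x : W) : x^~^~ = x. Proof. apply wa_R7. Qed.
Lemma cp_mono_r (x y z : W) : le x y -> le (z;x) (z;y).
Proof.
  intro E. rewrite <- (cv_cv (z;x)), <- (cv_cv (z;y)). apply cv_mono.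
  rewrite !wa_R9. apply cp_mono_l. apply cv_mono. exact E.
Qed.
Lemma id_cv : (@id' W)^~ = id'.
Proof.
  rewrite <- (cv_cv id') at 2. rewrite <- (wa_R6 _ (id'^~)) at 2.
  rewrite wa_R9, cv_cv. rewrite wa_R6. reflexivity.
Qed.
Lemma schroder (x y z : W) : le z (!(x;y)) -> le (x^~;z) (!y).
Proof.
  intro E. eapply le_trans. apply cp_mono_r. exact E. unfold le. apply wa_R10.
Qed.
Lemma bot_cv : (@bot W)^~ = bot.
Proof.
  apply le_antisym; [|apply le_bot].
  rewrite <- (cv_cv bot) at 2. apply cv_mono, le_bot.
Qed.
Lemma atom_cv (a : W) : is_atom a -> is_atom (a^~).
Proof.
  intros [Hne Ha]. split.
  - intro E. apply Hne. rewrite <- (cv_cv a), E. apply bot_cv.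
  - intros x Hx. apply cv_mono in Hx. rewrite cv_cv in Hx.
    destruct (Ha _ Hx) as [E|E]; [left|right]; rewrite <- (cv_cv x), E;
      [apply bot_cv|reflexivity].
Qed.
Lemma cycle1 (a b c : W) : is_atom a -> is_atom c -> le a (b;c) -> le c (b^~;a).
Proof.
  intros Ha Hc E. destruct (atom_split c (b^~;a) Hc) as [X|X]; auto.
  apply schroder in X. rewrite cv_cv in X.
  exfalso. apply (proj1 Ha). apply le_compl_bot. eapply le_trans; eauto.
Qed.
Lemma cycle2 (a b c : W) : is_atom a -> is_atom b -> is_atom c -> le a (b;c) -> le b (a;c^~).
Proof.
  intros Ha Hb Hc E. apply cv_mono in E. rewrite wa_R9 in E.
  apply cycle1 in E; try apply atom_cv; auto.
  apply cv_mono in E. rewrite wa_R9, !cv_cv in E. exact E.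
Qed.

Lemma side_id (s : I3 -> W) : inB s ->
  (le (s i2) id' -> le (s i0) id' -> le (s i1) id') /\
  (le (s i1) id' -> le (s i2) id' -> le (s i0) id') /\
  (le (s i1) id' -> le (s i0) id' -> le (s i2) id').
Proof.
  intros [Hat Hle]. split; [|split]; intros A B.
  - eapply le_trans. exact Hle. eapply le_trans. apply cp_mono_l; exact A.
    eapply le_trans. apply cp_mono_r; exact B. rewrite wa_R6. apply le_refl.
  - eapply le_trans. apply cycle1; eauto. eapply le_trans. apply cp_mono_l, cv_mono; exact B.
    rewrite id_cv. eapply le_trans. apply cp_mono_r; exact A. rewrite wa_R6. apply le_refl.
  - eapply le_trans. apply cycle2; eauto. eapply le_trans. apply cp_mono_l; exact A.
    eapply le_trans. apply cp_mono_r, cv_mono; exact B. rewrite id_cv, wa_R6. apply le_refl.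
Qed.

End Alg.
From Stdlib Require Import ClassicalEpsilon FunctionalExtensionality PropExtensionality Lia Relations.
Import ListNotations.

Section Comb.
Variable R : WA.
Local Notation V := (I3 -> R).
Local Notation E := ((I3 -> R) * I3 * (I3 -> R))%type.
Definition einv (e : E) : E := let '(u, l, v) := e in (v, l, u).
Lemma einv_inv e : einv (einv e) = e. Proof. destruct e as [[u l] v]; reflexivity. Qed.
Definition dec (P : Prop) : {P} + {~P} := excluded_middle_informative P.

Definition push (e : E) (acc : list E) : list E :=
  match acc with
  | f :: acc' => if dec (f = einv e) then acc' else e :: acc
  | [] => [e]
  end.
Definition redf (acc : list E) (w : list E) := fold_left (fun a e => push e a) w acc.
Definition red (w : list E) := redf [] w.

Fixpoint irr (acc : list E) : Prop :=
  match acc with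
  | f :: ((g :: _) as acc') => f <> einv g /\ irr acc'
  | _ => True
  end.

Lemma irr_tail f acc : irr (f :: acc) -> irr acc.
Proof. destruct acc; simpl; tauto. Qed.

Lemma push_irr e acc : irr acc -> irr (push e acc).
Proof.
  destruct acc as [|f acc]; simpl; auto. intro Hi.
  destruct (dec (f = einv e)) as [Hf|Hf].
  - eapply irr_tail; eauto.
  - simpl. split; auto. intro X. apply Hf. rewrite X, einv_inv. reflexivity.
Qed.

Lemma redf_irr acc w : irr acc -> irr (redf acc w).
Proof. revert acc; induction w; simpl; auto. intros acc H. apply IHw, push_irr, H. Qed.

Lemma push_cancel e acc : irr acc -> push (einv e) (push e acc) = acc.
Proof.
  destruct acc as [|f acc]; simpl.
  - intros _. destruct (dec (e = einv (einv e))) as [_|X]; auto. rewrite einv_inv in X; tauto.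
  - intro Hi. destruct (dec (f = einv e)) as [Hf|Hf].
    + destruct acc as [|g acc]; simpl.
      * destruct (dec (einv e = f)); auto; congruence.
      * destruct (dec (g = einv (einv e))) as [Hg|Hg].
        -- exfalso. destruct Hi as [Hi _]. apply Hi. rewrite Hf, Hg, einv_inv. reflexivity.
        -- subst f. reflexivity.
    + simpl. destruct (dec (e = einv (einv e))) as [_|X]; auto. rewrite einv_inv in X; tauto.
Qed.

Lemma red_cancel w1 e w2 : red (w1 ++ e :: einv e :: w2) = red (w1 ++ w2).
Proof.
  unfold red, redf. rewrite !fold_left_app. simpl.
  rewrite push_cancel. reflexivity. apply (redf_irr [] w1). exact I.
Qed.

Fixpoint nocan (w : list E) : Prop :=
  match w with
  | e :: ((f :: _) as w') => f <> einv e /\ nocan w'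
  | _ => True
  end.

Lemma redf_nocan x w acc : nocan (x :: w) -> redf (x :: acc) w = rev w ++ x :: acc.
Proof.
  revert x acc; induction w as [|f w IH]; intros x acc Hn; simpl; auto.
  destruct Hn as [Hf Hn].
  destruct (dec (x = einv f)) as [X|X].
  - exfalso. apply Hf. rewrite X, einv_inv. reflexivity.
  - rewrite IH by exact Hn. rewrite <- app_assoc. reflexivity.
Qed.

Lemma red_nocan w : nocan w -> red w = rev w.
Proof.
  destruct w as [|x w]; auto. intro Hn. unfold red. simpl. apply redf_nocan; auto.
Qed.

Lemma push_length e acc : length (push e acc) <= S (length acc).
Proof. destruct acc; simpl; auto. destruct dec; simpl; lia. Qed.
Lemma redf_length acc w : length (redf acc w) <= length acc + length w.
Proof.
  revert acc; induction w; intros acc; simpl; [lia|].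
  specialize (IHw (push a acc)). pose proof (push_length a acc). unfold redf in *. lia.
Qed.
Lemma red_length w : length (red w) <= length w.
Proof. apply (redf_length [] w). Qed.

Fixpoint chain (a : V) (w : list E) (b : V) : Prop :=
  match w with
  | [] => a = b /\ inB a
  | (u, l, v) :: w' => a = u /\ inB u /\ Trel l u v /\ chain v w' b
  end.

Lemma chain_inB a w b : chain a w b -> inB a.
Proof. destruct w as [|[[u l] v] w]; simpl; intuition; subst; auto. Qed.

Lemma chain_inB_end a w b : chain a w b -> inB b.
Proof.
  revert a; induction w as [|[[u l] v] w IH]; intros a; simpl.
  - intros [-> H]; exact H.
  - intros (_ & _ & _ & H). eapply IH; eauto.
Qed.

Lemma chain_app a w1 w2 b : chain a (w1 ++ w2) b <-> exists m, chain a w1 m /\ chain m w2 b.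
Proof.
  revert a; induction w1 as [|[[u l] v] w1 IH]; intros a; simpl.
  - split. intro H. exists a. split; auto. split; auto. eapply chain_inB; eauto.
    intros [m [[-> _] H]]. exact H.
  - rewrite IH. split.
    + intros (-> & Hu & Ht & m & H1 & H2). exists m. tauto.
    + intros (m & (-> & Hu & Ht & H1) & H2). split; [reflexivity|]. split; [exact Hu|]. split; [exact Ht|]. exists m; tauto.
Qed.

Lemma chain_push a acc m l v : chain a (rev acc) m -> Trel l m v -> inB v ->
  chain a (rev (push (m, l, v) acc)) v.
Proof.
  intros Hc Ht Hv. destruct acc as [|f acc]; simpl in *.
  - destruct Hc as [-> Hm]. split; [reflexivity|split; [exact Hm|split; [exact Ht|split; [reflexivity|exact Hv]]]].
  - destruct (dec _) as [Hf|Hf].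
    + subst f. simpl in Hc. apply chain_app in Hc. destruct Hc as (m' & H1 & H2).
      simpl in H2. destruct H2 as (-> & _ & _ & _ & _). exact H1.
    + simpl. apply chain_app. exists m. split; auto.
      split; [reflexivity|split; [|split; [exact Ht|split; [reflexivity|exact Hv]]]].
      apply chain_app in Hc. destruct Hc as (m' & _ & H2).
      destruct f as [[x y] z]. simpl in H2. destruct H2 as (_ & _ & _ & -> & Hm). exact Hm.
Qed.

Lemma chain_redf a acc m w b : chain a (rev acc) m -> chain m w b -> chain a (rev (redf acc w)) b.
Proof.
  revert acc m; induction w as [|[[u l] v] w IH]; intros acc m H1 H2; simpl in *.
  - destruct H2 as [-> _]; auto.
  - destruct H2 as (-> & Hu & Ht & H2). apply (IH _ v); auto.
    apply chain_push; auto. eapply chain_inB; eauto.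
Qed.

Lemma chain_red a w b : chain a w b -> chain a (rev (red w)) b.
Proof. intro H. apply (chain_redf a [] a); simpl; auto. split; auto. eapply chain_inB; eauto. Qed.

End Comb.
Arguments push {R}. Arguments redf {R}. Arguments red {R}. Arguments irr {R}. Arguments nocan {R}. Arguments chain {R}. Arguments einv {R}.

Section Comb2.
Variable R : WA.
Local Notation V := (I3 -> R).
Local Notation E := ((I3 -> R) * I3 * (I3 -> R))%type.

Definition I3_dec (a b : I3) : {a = b} + {a <> b}. Proof. decide equality. Defined.

Lemma third_sym k l : third k l = third l k. Proof. destruct k, l; reflexivity. Qed.
Lemma third_is l k c : l <> k -> l <> c -> k <> c -> third l k = c.
Proof. destruct l, k, c; simpl; congruence. Qed.
Lemma third_ne1 k l : k <> l -> third k l <> k. Proof. destruct k, l; simpl; congruence. Qed.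
Lemma third_ne2 k l : k <> l -> third k l <> l. Proof. destruct k, l; simpl; congruence. Qed.

Lemma Erel_refl (s : V) k : inB s -> Erel k k s.
Proof. split; auto. Qed.
Lemma Erel_inB (s : V) k l : Erel k l s -> inB s.
Proof. intros [H _]; exact H. Qed.
Lemma Erel_sym (s : V) k l : Erel k l s -> Erel l k s.
Proof. intros [H [A|[B C]]]; split; auto. right. rewrite third_sym. split; auto. Qed.
Lemma Erel_trans (s : V) k l m : Erel k l s -> Erel l m s -> Erel k m s.
Proof.
  intros [Hs A] [_ B]. split; auto.
  pose proof (side_id R s Hs) as (S1 & S2 & S3).
  destruct A as [A|[An A]]; [subst; auto|].
  destruct B as [B|[Bn B]]; [subst; right; auto|].
  destruct k, l, m; simpl in *; try congruence; try (left; reflexivity);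
    right; split; try congruence; auto.
Qed.
Lemma Erel_transfer (u t : V) c l k : Trel c u t -> inB u -> Erel l k t -> l <> c -> k <> c ->
  Erel l k u.
Proof.
  intros Ht Hu [_ [A|[An A]]] Hl Hk; split; auto. right. split; auto.
  rewrite (third_is l k c) in * by auto. unfold Trel in Ht. rewrite Ht. exact A.
Qed.

Definition minptr (a : V) (k : I3) : I3 :=
  if dec (Erel k i0 a) then i0 else if dec (Erel k i1 a) then i1 else k.

Lemma minptr_eq a l k : Erel l k a -> minptr a l = minptr a k.
Proof.
  intro H. unfold minptr.
  assert (Hs := Erel_inB _ _ _ H).
  destruct (dec (Erel l i0 a)) as [A|A]; destruct (dec (Erel k i0 a)) as [B|B]; auto.
  - exfalso. apply B. eapply Erel_trans; [apply Erel_sym, H|exact A].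
  - exfalso. apply A. eapply Erel_trans; [apply H|exact B].
  - destruct (dec (Erel l i1 a)) as [C|C]; destruct (dec (Erel k i1 a)) as [D|D]; auto.
    + exfalso. apply D. eapply Erel_trans; [apply Erel_sym, H|exact C].
    + exfalso. apply C. eapply Erel_trans; [apply H|exact D].
    + destruct l; [exfalso; apply A; apply Erel_refl; auto|exfalso; apply C; apply Erel_refl; auto|].
      destruct k; [exfalso; apply B; apply Erel_refl; auto|exfalso; apply D; apply Erel_refl; auto|].
      reflexivity.
Qed.

Lemma minptr_rel a k : inB a -> Erel k (minptr a k) a.
Proof.
  intro H. unfold minptr. destruct (dec _); auto. destruct (dec _); auto. apply Erel_refl; auto.
Qed.

Definition nx (k : I3) : I3 := match k with i0 => i1 | i1 => i2 | i2 => i0 end.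

Definition pick (v : V) (k : I3) : option I3 :=
  if dec (Erel k (nx k) v) then Some (nx k)
  else if dec (Erel k (nx (nx k)) v) then Some (nx (nx k)) else None.

Lemma pick_some v k l : pick v k = Some l -> l <> k /\ Erel k l v.
Proof.
  unfold pick. destruct (dec _) as [A|A].
  - intro X; inversion X; subst. split; auto. destruct k; discriminate.
  - destruct (dec _) as [B|B]; intro X; inversion X; subst. split; auto. destruct k; discriminate.
Qed.
Lemma pick_none v k l : pick v k = None -> Erel k l v -> l = k.
Proof.
  unfold pick. destruct (dec _) as [A|A]; [discriminate|].
  destruct (dec _) as [B|B]; [discriminate|]. intros _ H.
  destruct k, l; simpl in *; auto; tauto.
Qed.

Fixpoint endnorm (a : V) (st : list E) (k : I3) : V * list E * I3 :=
  match st with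
  | [] => (a, [], minptr a k)
  | (u, c, v) :: st' =>
      if I3_dec c k then
        match pick v k with
        | Some l => endnorm a st' l
        | None => (a, st, k)
        end
      else endnorm a st' k
  end.

Lemma endnorm_length a st k : length (snd (fst (endnorm a st k))) <= length st.
Proof.
  revert k; induction st as [|[[u c] v] st IH]; intro k; simpl; auto.
  destruct (I3_dec c k); [destruct (pick v k)|]; simpl.
  - specialize (IH i); lia.
  - lia.
  - specialize (IH k); lia.
Qed.

Lemma EN a st : forall t l k, chain a (rev st) t -> Erel l k t -> endnorm a st l = endnorm a st k.
Proof.
  induction st as [|[[u c] v] st IH]; intros t l k Hc Hlk.
  - simpl in Hc. destruct Hc as [-> _]. simpl. rewrite (minptr_eq _ _ _ Hlk). reflexivity.
  - simpl in Hc. apply chain_app in Hc. destruct Hc as (m & H1 & H2).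
    simpl in H2. destruct H2 as (-> & Hu & Ht & -> & _).
    simpl. destruct (I3_dec c l) as [Cl|Cl]; destruct (I3_dec c k) as [Ck|Ck].
    + subst; reflexivity.
    + subst c. destruct (pick t l) as [x|] eqn:P.
      * apply pick_some in P. destruct P as [Px Pe].
        destruct (I3_dec x k) as [->|Xk]. reflexivity.
        apply (IH u); auto. apply (Erel_transfer u t l); auto.
        eapply Erel_trans; [apply Erel_sym, Pe|exact Hlk].
      * exfalso. apply Ck. symmetry. apply (pick_none _ _ _ P Hlk).
    + subst c. destruct (pick t k) as [x|] eqn:P.
      * apply pick_some in P. destruct P as [Px Pe].
        destruct (I3_dec x l) as [->|Xl]. reflexivity.
        apply (IH u); auto. apply (Erel_transfer u t k); auto.
        eapply Erel_trans; [exact Hlk|exact Pe].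
      * exfalso. apply Cl. symmetry. apply (pick_none _ _ _ P (Erel_sym _ _ _ Hlk)).
    + apply (IH u); auto. apply (Erel_transfer u t c); auto.
Qed.

End Comb2.
Arguments minptr {R}. Arguments pick {R}. Arguments endnorm {R}.

Section Trails.
Variable R : WA.
Local Notation V := (I3 -> R).
Local Notation E := ((I3 -> R) * I3 * (I3 -> R))%type.
Local Notation T := (trail R).

Fixpoint vtr (p : T) : Prop :=
  match p with
  | [] => False
  | [(t, _)] => inB t
  | (t, k) :: (((s, _) :: _) as p') => inB t /\ t <> s /\ Trel k t s /\ vtr p'
  end.

Fixpoint edges (p : T) : list E :=
  match p with
  | (t, k) :: (((s, _) :: _) as p') => (t, k, s) :: edges p'
  | _ => []
  end.

Definition start (p : T) : V := fst (hd dflt p).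
Definition lastv (p : T) : V := fst (last p dflt).
Definition ptr (p : T) : I3 := snd (last p dflt).

Fixpoint nobt (p : T) : Prop :=
  match p with
  | (t, l) :: (((s, l') :: (t', _) :: _) as p') => (t <> t' \/ l <> l') /\ nobt p'
  | _ => True
  end.

Lemma vtr_cons (x y : V * I3) (r : T) : vtr (x :: y :: r) <->
  inB (fst x) /\ fst x <> fst y /\ Trel (snd x) (fst x) (fst y) /\ vtr (y :: r).
Proof. destruct x as [t k], y as [s m]; simpl. tauto. Qed.

Lemma vtr_hd (p : T) : vtr p -> inB (start p).
Proof. destruct p as [|[t k] [|[s m] r]]; simpl; tauto. Qed.

Lemma is_trail_vtr (p : T) : is_trail p <-> vtr p.
Proof.
  induction p as [|x p IH].
  - split; [intros [H _]; congruence|simpl; tauto].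
  - destruct p as [|y p].
    + destruct x as [t k]. unfold is_trail, tr, pt; simpl. split.
      * intros (_ & H & _). apply (H 0); lia.
      * intros H. split; [congruence|]. split.
        -- intros i Hi. destruct i; [exact H|simpl in Hi; lia].
        -- intros i Hi. simpl in Hi; lia.
    + rewrite vtr_cons, <- IH. unfold is_trail, tr, pt. simpl. split.
      * intros (_ & H1 & H2). split; [apply (H1 0); lia|].
        destruct (H2 0 ltac:(lia)) as [A B]. split; [exact A|]. split; [exact B|].
        split; [congruence|]. split.
        -- intros i Hi. apply (H1 (S i)). simpl. lia.
        -- intros i Hi. apply (H2 (S i)). simpl in *. lia.
      * intros (A & B & C & _ & D1 & D2). split; [congruence|]. split.
        -- intros [|i] Hi; [exact A|apply D1; simpl in *; lia].
        -- intros [|i] Hi; [split; auto|apply D2; simpl in *; lia].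
Qed.

Lemma vtr_chain (p : T) : vtr p -> chain (start p) (edges p) (lastv p).
Proof.
  induction p as [|[t k] p IH]; simpl; [tauto|].
  destruct p as [|[s m] p].
  - unfold start, lastv; simpl. auto.
  - intros (A & B & C & D). specialize (IH D). unfold start, lastv in *. simpl in *.
    split; [reflexivity|]. split; [exact A|]. split; [exact C|]. exact IH.
Qed.

Lemma nobt_iff (p : T) : nobt p <-> forall i, i + 2 < length p -> tr p i <> tr p (i + 2) \/ pt p i <> pt p (i + 1).
Proof.
  induction p as [|[t l] p IH].
  - simpl. split; auto. intros _ i Hi; lia.
  - destruct p as [|[s l'] p].
    + simpl. split; auto. intros _ i Hi; lia.
    + destruct p as [|[t' k] p].
      * simpl. split; auto. intros _ i Hi; lia.
      * change (nobt ((t, l) :: (s, l') :: (t', k) :: p)) with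
          ((t <> t' \/ l <> l') /\ nobt ((s, l') :: (t', k) :: p)).
        rewrite IH. unfold tr, pt. split.
        -- intros [A B] [|i] Hi; simpl.
           ++ destruct A as [A|A]; [left|right]; auto.
           ++ apply (B i). simpl in *; lia.
        -- intros H. split.
           ++ destruct (H 0 ltac:(simpl; lia)) as [A|A]; simpl in A; auto.
           ++ intros i Hi. apply (H (S i)). simpl in *; lia.
Qed.

Lemma nobt_nocan (p : T) : nobt p -> nocan (edges p).
Proof.
  induction p as [|[t l] p IH]; simpl; auto.
  destruct p as [|[s l'] p]; simpl; auto.
  destruct p as [|[t' k] p]; simpl; auto.
  intros [A B]. specialize (IH B). simpl in IH. split; auto.
  intro X. inversion X; subst. destruct A; auto.
Qed.

Lemma not_nobt (p : T) : ~ nobt p -> exists pre t l s k post,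
  p = pre ++ (t, l) :: (s, l) :: (t, k) :: post.
Proof.
  induction p as [|[t l] p IH]; simpl; [tauto|].
  destruct p as [|[s l'] p]; [tauto|].
  destruct p as [|[t' k] p]; [tauto|].
  intro H.
  destruct (dec ((t <> t' \/ l <> l'))) as [A|A].
  - destruct IH as (pre & a & b & c & d & post & E).
    { intro B. apply H. split; auto. }
    exists ((t, l) :: pre), a, b, c, d, post. rewrite E. reflexivity.
  - assert (t = t') by (destruct (dec (t = t')); tauto).
    assert (l = l') by (destruct (dec (l = l')); tauto). subst.
    exists [], t', l', s, k, p. reflexivity.
Qed.

Lemma setptr_cons2 (x y : V * I3) (r : T) l : setptr (x :: y :: r) l = x :: setptr (y :: r) l.
Proof. destruct x; reflexivity. Qed.
Lemma setptr_app (x y : T) l : y <> [] -> setptr (x ++ y) l = x ++ setptr y l.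
Proof.
  intro Hy. induction x as [|a x IH]; simpl; auto.
  destruct (x ++ y) eqn:X.
  - destruct x; destruct y; simpl in X; congruence.
  - rewrite <- X. rewrite <- IH. rewrite X. apply setptr_cons2.
Qed.
Lemma setptr_last (pre : T) (t : V) k l : setptr (pre ++ [(t, k)]) l = pre ++ [(t, l)].
Proof. rewrite setptr_app by congruence. reflexivity. Qed.
Lemma setptr_setptr (p : T) k l : setptr (setptr p k) l = setptr p l.
Proof.
  destruct (dec (p = [])) as [->|Hp]; [reflexivity|].
  destruct (exists_last Hp) as (pre & [t m] & ->).
  rewrite !setptr_last. reflexivity.
Qed.
Lemma setptr_length (p : T) l : length (setptr p l) = length p.
Proof.
  destruct (dec (p = [])) as [->|Hp]; [reflexivity|].
  destruct (exists_last Hp) as (pre & [t m] & ->).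
  rewrite !setptr_last, !length_app. reflexivity.
Qed.

Lemma vtr_lastptr (pre : T) (t : V) k l : vtr (pre ++ [(t, k)]) -> vtr (pre ++ [(t, l)]).
Proof.
  induction pre as [|a pre IH]; [simpl; auto|].
  destruct pre as [|b pre]; cbn [app].
  - rewrite !vtr_cons. simpl. tauto.
  - rewrite !vtr_cons. intros (A & B & C & D).
    split; [exact A|]. split; [exact B|]. split; [exact C|]. apply IH, D.
Qed.

Lemma vtr_setptr (p : T) l : vtr p -> vtr (setptr p l).
Proof.
  destruct (dec (p = [])) as [->|Hp]; [simpl; tauto|].
  destruct (exists_last Hp) as (pre & [t m] & ->).
  rewrite setptr_last. apply vtr_lastptr.
Qed.

Lemma vtr_app_l (x y : T) : x <> [] -> vtr (x ++ y) -> vtr x.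
Proof.
  induction x as [|a x IH]; [congruence|]. intros _.
  destruct x as [|b x].
  - destruct y as [|c y]; cbn [app]; auto. rewrite vtr_cons. destruct a; simpl; tauto.
  - cbn [app]. rewrite !vtr_cons. intros (A & B & C & D).
    split; [exact A|]. split; [exact B|]. split; [exact C|]. apply IH; [congruence|exact D].
Qed.

Lemma vtr_bt (pre : T) (t : V) l (s : V) k (post : T) : vtr (pre ++ (t, l) :: (s, l) :: (t, k) :: post) ->
  vtr (pre ++ (t, k) :: post).
Proof.
  induction pre as [|a pre IH].
  - cbn [app]. rewrite !vtr_cons. destruct post; simpl; tauto.
  - destruct pre as [|b pre].
    + cbn [app]. rewrite !vtr_cons. simpl. tauto.
    + cbn [app]. rewrite !vtr_cons. intros (A & B & C & D).
      split; [exact A|]. split; [exact B|]. split; [exact C|]. apply IH, D.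
Qed.

Lemma edges_app (pre : T) (t : V) a (r : T) : edges (pre ++ (t, a) :: r) = edges (pre ++ [(t, a)]) ++ edges ((t, a) :: r).
Proof.
  induction pre as [|[u m] pre IH]; simpl; auto.
  destruct pre as [|[w n] pre]; simpl; auto.
  simpl in IH. rewrite IH. reflexivity.
Qed.
Lemma edges_lastptr (pre : T) (t : V) a b : edges (pre ++ [(t, a)]) = edges (pre ++ [(t, b)]).
Proof.
  induction pre as [|[u m] pre IH]; simpl; auto.
  destruct pre as [|[w n] pre]; simpl; auto.
  simpl in IH. rewrite IH. reflexivity.
Qed.
Lemma edges_length (p : T) : length (edges p) = pred (length p).
Proof.
  induction p as [|[t k] p IH]; simpl; auto.
  destruct p as [|[s m] p]; simpl in *; auto.
Qed.

Lemma last_app_ne (x y : T) d : y <> [] -> last (x ++ y) d = last y d.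
Proof.
  intro Hy. induction x as [|a x IH]; simpl; auto.
  rewrite IH. destruct (x ++ y) eqn:X; auto. destruct x, y; simpl in X; congruence.
Qed.

Definition nf (p : T) := endnorm (start p) (red (edges p)) (ptr p).

Lemma start_app (pre : T) (x y : V * I3) (r r' : T) : fst x = fst y -> start (pre ++ x :: r) = start (pre ++ y :: r').
Proof. destruct pre; simpl; auto. Qed.

Lemma red_snoc (w : list E) e : red (w ++ [e]) = push e (red w).
Proof. unfold red, redf. rewrite fold_left_app. reflexivity. Qed.

Lemma endnorm_push_ne (a : V) st (t : V) l (s : V) k : l <> k ->
  endnorm a (push (t, l, s) st) k = endnorm a st k.
Proof.
  intro H. destruct st as [|f st]; simpl.
  - destruct (I3_dec l k); [congruence|reflexivity].
  - destruct (dec _) as [->|Hf]; simpl; destruct (I3_dec l k); try congruence; reflexivity.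
Qed.

Lemma nf_step (p q : T) : vtr p -> vtr q -> step p q -> nf p = nf q.
Proof.
  intros Hp Hq Hs. destruct Hs as [pre post t k l s|pre t l s k Hlk|pre t l k He].
  - cbn [app]. unfold nf.
    replace (ptr (pre ++ (t, l) :: (s, l) :: (t, k) :: post)) with (ptr (pre ++ (t, k) :: post)).
    2:{ unfold ptr. rewrite !last_app_ne by congruence.
        destruct post; reflexivity. }
    rewrite (start_app pre (t, l) (t, k) _ post) by reflexivity. f_equal.
    rewrite (edges_app pre t l), (edges_app pre t k), (edges_lastptr pre t l k).
    exact (red_cancel R _ (t, l, s) _).
  - unfold nf.
    replace (ptr (pre ++ [(t, l); (s, k)])) with k.
    2:{ unfold ptr. rewrite last_app_ne by congruence. reflexivity. }
    replace (ptr (pre ++ [(t, k)])) with k.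
    2:{ unfold ptr. rewrite last_app_ne by congruence. reflexivity. }
    rewrite (start_app pre (t, l) (t, k) _ []) by reflexivity.
    rewrite (edges_app pre t l). rewrite (edges_lastptr pre t l k). simpl.
    rewrite red_snoc. apply endnorm_push_ne. exact Hlk.
  - unfold nf.
    replace (ptr (pre ++ [(t, l)])) with l.
    2:{ unfold ptr. rewrite last_app_ne by congruence. reflexivity. }
    replace (ptr (pre ++ [(t, k)])) with k.
    2:{ unfold ptr. rewrite last_app_ne by congruence. reflexivity. }
    rewrite (start_app pre (t, l) (t, k) [] []) by reflexivity.
    rewrite (edges_lastptr pre t l k).
    apply (EN R _ _ t).
    + apply chain_red. pose proof (vtr_chain _ Hq) as C.
      unfold lastv in C. rewrite last_app_ne in C by congruence. exact C.
    + exact He.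
Qed.

End Trails.
Arguments vtr {R}. Arguments edges {R}. Arguments start {R}. Arguments lastv {R}. Arguments ptr {R}. Arguments nobt {R}. Arguments nf {R}.

Section Main.
Variable R : WA.
Local Notation V := (I3 -> R).
Local Notation T := (trail R).

Lemma approx_refl (p : T) : is_trail p -> approx p p.
Proof. intro H. split; auto. split; auto. apply rst_refl. Qed.
Lemma approx_sym (p q : T) : approx p q -> approx q p.
Proof. intros (A & B & C). split; auto. split; auto. apply rst_sym; auto. Qed.
Lemma approx_trans (p q r : T) : approx p q -> approx q r -> approx p r.
Proof. intros (A & B & C) (D & F & G). split; auto. split; auto. eapply rst_trans; eauto. Qed.
Lemma step_approx (p q : T) : vtr p -> vtr q -> step p q -> approx p q.
Proof.
  intros A B C. rewrite <- is_trail_vtr in A, B. split; auto. split; auto.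
  apply rst_step. split; auto.
Qed.

Lemma nf_approx (p q : T) : approx p q -> nf p = nf q.
Proof.
  intros (_ & _ & H). induction H as [p q [A [B C]]| | |]; auto.
  - rewrite is_trail_vtr in A, B. apply nf_step; auto.
  - congruence.
Qed.

Lemma cls_eq (p q : T) : approx p q -> cls p = cls q.
Proof.
  intro H. apply functional_extensionality. intro r. apply propositional_extensionality.
  unfold cls. split; intro X.
  - eapply approx_trans; [apply approx_sym, H|exact X].
  - eapply approx_trans; eauto.
Qed.
Lemma cls_inv (p q : T) : is_trail p -> cls p = cls q -> approx q p.
Proof. intros H E. assert (X : cls p p) by (apply approx_refl; auto). rewrite E in X. exact X. Qed.

Lemma last2 (p : T) : 2 <= length p -> exists pre x y, p = pre ++ [x; y].
Proof.
  intro H. destruct (exists_last (l := p)) as (p1 & y & E). { intros ->; simpl in H; lia. }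
  destruct (exists_last (l := p1)) as (pre & x & E1).
  { intros ->. subst. simpl in H. lia. }
  exists pre, x, y. subst. rewrite <- app_assoc. reflexivity.
Qed.

Lemma nth_pre2 (pre : T) x y d : nth (length pre) (pre ++ [x; y]) d = x.
Proof. apply nth_middle. Qed.
Lemma nth_pre2' (pre : T) x y d : nth (S (length pre)) (pre ++ [x; y]) d = y.
Proof. rewrite app_nth2 by lia. replace (S (length pre) - length pre) with 1 by lia. reflexivity. Qed.

Lemma edges_pre2 (pre : T) (a : V) k (t : V) m : edges (pre ++ [(a, k); (t, m)]) = edges (pre ++ [(a, k)]) ++ [(a, k, t)].
Proof. rewrite edges_app. reflexivity. Qed.

Lemma ptr_pre (pre : T) x : ptr (pre ++ [x]) = snd x.
Proof. unfold ptr. rewrite last_app_ne by congruence. reflexivity. Qed.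

Lemma ptr_pre2 (pre : T) x y : ptr (pre ++ [x; y]) = snd y.
Proof. unfold ptr. rewrite last_app_ne by congruence. reflexivity. Qed.

Lemma pointer_ptr (p : T) : p <> [] -> pointer p = ptr p.
Proof.
  intro Hp. destruct (exists_last Hp) as (pre & x & ->). rewrite ptr_pre.
  unfold pointer, pt. rewrite length_app. simpl. replace (pred (length pre + 1)) with (length pre) by lia.
  rewrite nth_middle. reflexivity.
Qed.

Lemma nf_reduced (q : T) : reduced q -> length q > 1 -> nf q = (start q, rev (edges q), ptr q).
Proof.
  intros (Ht & _ & Hb & Hc) Hl. specialize (Hb Hl). destruct Hb as [B1 B2].
  rewrite <- nobt_iff in Hc. apply nobt_nocan in Hc.
  unfold nf. rewrite (red_nocan R _ Hc).
  destruct (last2 q) as (pre & [a k'] & [t k] & ->); [lia|].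
  rewrite length_app in B1, B2. simpl in B1, B2.
  replace (length pre + 2 - 2) with (length pre) in B1 by lia.
  replace (length pre + 2 - 1) with (S (length pre)) in B1, B2 by lia.
  unfold pt, tr in B1, B2. rewrite nth_pre2, nth_pre2' in B1. rewrite nth_pre2' in B2. simpl in B1, B2.
  subst k'. rewrite edges_pre2. rewrite rev_app_distr. simpl.
  rewrite ptr_pre2. simpl. destruct (I3_dec k k); [|congruence].
  destruct (pick t k) as [x|] eqn:P; [|reflexivity].
  apply pick_some in P. destruct P as [P1 P2]. apply B2 in P2. congruence.
Qed.

Lemma reconstruct (p q : T) : p <> [] -> q <> [] -> start p = start q -> edges p = edges q ->
  ptr p = ptr q -> p = q.
Proof.
  revert q. induction p as [|[t k] p IH]; intros q Hp Hq S Ed P; [congruence|].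
  destruct q as [|[t' k'] q]; [congruence|]. unfold start in S; simpl in S. subst t'.
  destruct p as [|[s m] p]; destruct q as [|[s' m'] q]; simpl in Ed; try discriminate.
  - unfold ptr in P. simpl in P. congruence.
  - inversion Ed; subst. f_equal. apply IH; try congruence; auto.
Qed.

Lemma nobt_lastptr (pre : T) (t : V) k l : nobt (pre ++ [(t, k)]) -> nobt (pre ++ [(t, l)]).
Proof.
  induction pre as [|[x1 x2] pre IH]; [simpl; auto|].
  destruct pre as [|[y1 y2] pre]; [simpl; auto|].
  destruct pre as [|[z1 z2] pre]; [simpl; tauto|].
  cbn [app]. change (nobt ((x1, x2) :: (y1, y2) :: (z1, z2) :: pre ++ [(t, k)])) with
    ((x1 <> z1 \/ x2 <> y2) /\ nobt ((y1, y2) :: (z1, z2) :: pre ++ [(t, k)])).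
  change (nobt ((x1, x2) :: (y1, y2) :: (z1, z2) :: pre ++ [(t, l)])) with
    ((x1 <> z1 \/ x2 <> y2) /\ nobt ((y1, y2) :: (z1, z2) :: pre ++ [(t, l)])).
  intros [A B]. split; [exact A|apply IH; exact B].
Qed.

Lemma reduced_A (pre : T) (a : V) k (t : V) : vtr (pre ++ [(a, k); (t, k)]) ->
  nobt (pre ++ [(a, k); (t, k)]) -> (forall l, Erel k l t -> k = l) ->
  reduced (pre ++ [(a, k); (t, k)]).
Proof.
  intros Hv Hn He. split; [apply (proj2 (is_trail_vtr _ _) Hv)|]. split.
  { rewrite length_app; simpl; lia. }
  split; [|apply (proj1 (nobt_iff _ _)); auto].
  intros _. rewrite length_app. simpl.
  replace (length pre + 2 - 2) with (length pre) by lia.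
  replace (length pre + 2 - 1) with (S (length pre)) by lia.
  unfold pt, tr. rewrite nth_pre2, nth_pre2'. simpl. split; auto.
  intro l. split; auto. intros <-. apply Erel_refl.
  pose proof (vtr_chain _ _ Hv) as C. apply chain_inB_end in C.
  unfold lastv in C. rewrite last_app_ne in C by congruence. exact C.
Qed.

End Main.

Section Final.
Variable R : WA.
Local Notation V := (I3 -> R).
Local Notation T := (trail R).
Local Notation P := (point R).

Definition X (p : T) j : P := cls (setptr p j).
Definition triple (p : T) := (X p i0, X p i1, X p i2).

Definition Goal (x : P * P * P) : Prop :=
  exists u v w : P, inU u /\ inU v /\ inU w /\
    ( (u <> v /\ u <> w /\ v <> w /\ perm3 x u v w /\ Xi_is u v w /\ Xi_pair v w)
    \/ (u <> v /\ u <> w /\ v <> w /\ perm3 x u v w /\ Xi_is u v w /\ base_pair v w)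
    \/ (u <> v /\ u <> w /\ v <> w /\ perm3 x u v w /\
       base_pair u v /\ base_pair u w /\ base_pair v w)
    \/ (u <> v /\ perm3 x u u v /\ Xi_pair u v)
    \/ (u <> v /\ perm3 x u u v /\ base_pair u v)
    \/ x = (u, u, u) ).

Definition good (a b : P) : Prop := a = b \/ Xi_pair a b \/ base_pair a b.
Definition gt (x : P * P * P) : Prop :=
  match x with (a, b, c) => good a b /\ good a c /\ good b c end.

Lemma good_sym a b : good a b -> good b a.
Proof.
  unfold good, Xi_pair. intros [H|[[H|H]|H]]; auto.
  right; right. destruct H as (t & k & l & A & B & C & D & F).
  exists t, l, k. rewrite third_sym. split; [exact A|]. split; [auto|]. split; [exact C|].
  split; [exact F|exact D].
Qed.

Ltac pick6 := solve [ left; reflexivity | right; left; reflexivity | right; right; left; reflexivity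
  | right; right; right; left; reflexivity | right; right; right; right; left; reflexivity
  | right; right; right; right; right; reflexivity ].

Lemma perm3_sw12 (x : P * P * P) a b c : perm3 x a b c -> perm3 x b a c.
Proof. unfold perm3. intros [H|[H|[H|[H|[H|H]]]]]; subst; pick6. Qed.
Lemma perm3_sw23 (x : P * P * P) a b c : perm3 x a b c -> perm3 x a c b.
Proof. unfold perm3. intros [H|[H|[H|[H|[H|H]]]]]; subst; pick6. Qed.
Lemma perm3_same (x : P * P * P) u : perm3 x u u u -> x = (u, u, u).
Proof. unfold perm3. intuition. Qed.

Lemma perm_gt x a b c : perm3 x a b c -> gt (a, b, c) -> gt x.
Proof.
  intros Hp (G1 & G2 & G3).
  destruct Hp as [H|[H|[H|[H|[H|H]]]]]; rewrite H; simpl; repeat split; auto using good_sym.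
Qed.

Lemma Goal_gt x : Goal x -> gt x.
Proof.
  intros (u & v & w & _ & _ & _ & H).
  assert (XI : forall v w, Xi_is u v w -> Xi_pair u v /\ Xi_pair u w).
  { intros v' w' Hx. split; left; apply (proj2 (Hx u _)); [left|right]; split; reflexivity. }
  destruct H as [H|[H|[H|[H|[H|H]]]]].
  - destruct H as (_ & _ & _ & Pm & Xi & Xp). apply (perm_gt _ _ _ _ Pm). apply XI in Xi.
    simpl. unfold good. tauto.
  - destruct H as (_ & _ & _ & Pm & Xi & Xp). apply (perm_gt _ _ _ _ Pm). apply XI in Xi.
    simpl. unfold good. tauto.
  - destruct H as (_ & _ & _ & Pm & B1 & B2 & B3). apply (perm_gt _ _ _ _ Pm).
    simpl. unfold good. tauto.
  - destruct H as (_ & Pm & Xp). apply (perm_gt _ _ _ _ Pm). simpl. unfold good. tauto.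
  - destruct H as (_ & Pm & Xp). apply (perm_gt _ _ _ _ Pm). simpl. unfold good. tauto.
  - subst x. simpl. unfold good. tauto.
Qed.

Lemma gt_pair (p : T) l m : gt (triple p) -> l <> m -> good (X p l) (X p m).
Proof.
  unfold triple. simpl. intros (A & B & C) H. destruct l, m; try congruence; auto using good_sym.
Qed.

Lemma perm_triple (p : T) k l : k <> l -> perm3 (triple p) (X p k) (X p l) (X p (third k l)).
Proof. unfold perm3, triple. destruct k, l; simpl; intro H; try congruence; pick6. Qed.

Lemma X_inU (p : T) j : vtr p -> inU (X p j).
Proof. intro H. exists (setptr p j). split; [apply is_trail_vtr, vtr_setptr, H|reflexivity]. Qed.

Lemma setptr_mid (pre : T) x (r : T) j : setptr (pre ++ x :: r) j = pre ++ setptr (x :: r) j.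
Proof. apply setptr_app. congruence. Qed.

Lemma setptr_cons_shape (t : V) k (post : T) j : exists k' post', setptr ((t, k) :: post) j = (t, k') :: post'.
Proof.
  destruct post as [|y post].
  - exists j, []. reflexivity.
  - exists k, (setptr (y :: post) j). apply setptr_cons2.
Qed.

Lemma X_bt (pre : T) (t : V) l (s : V) k (post : T) j :
  vtr (pre ++ (t, l) :: (s, l) :: (t, k) :: post) ->
  X (pre ++ (t, l) :: (s, l) :: (t, k) :: post) j = X (pre ++ (t, k) :: post) j.
Proof.
  intro H. unfold X. apply cls_eq. apply step_approx.
  - apply vtr_setptr, H.
  - apply vtr_setptr. eapply vtr_bt. exact H.
  - rewrite !setptr_mid. rewrite !setptr_cons2.
    destruct (setptr_cons_shape t k post j) as (k' & post' & ->).
    exact (step1 pre post' t k' l s).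
Qed.

Lemma setptr_pre2 (pre : T) (a : V) k (t : V) m j : setptr (pre ++ [(a, k); (t, m)]) j = pre ++ [(a, k); (t, j)].
Proof. rewrite setptr_mid. reflexivity. Qed.

Lemma base_case (t : V) k : vtr [(t, k)] -> Goal (triple [(t, k)]).
Proof.
  simpl. intro Ht.
  set (Y := fun j => cls [(t, j)] : P).
  assert (HT : triple [(t, k)] = (Y i0, Y i1, Y i2)) by reflexivity.
  assert (Hu : forall j, inU (Y j)).
  { intro j. exists [(t, j)]. split; [apply is_trail_vtr; exact Ht|reflexivity]. }
  assert (Yeq : forall i j, Erel i j t -> Y i = Y j).
  { intros i j He. apply cls_eq. apply step_approx; simpl; auto. exact (step3 [] t i j He). }
  assert (Yne : forall i j, ~ Erel i j t -> Y i <> Y j).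
  { intros i j He E. apply cls_inv in E; [|apply is_trail_vtr; exact Ht].
    apply nf_approx in E. unfold nf in E. simpl in E. inversion E as [E1].
    change (minptr t j = minptr t i) in E1.
    apply He. eapply Erel_trans; [apply minptr_rel; exact Ht|].
    rewrite <- E1. apply Erel_sym, minptr_rel; exact Ht. }
  assert (Yb : forall i j, i <> j -> ~ Erel i j t -> base_pair (Y i) (Y j)).
  { intros i j Hij He. exists t, i, j. split; [exact Ht|]. split; [exact Hij|].
    split; [|split; reflexivity].
    destruct (atom_split R (t (third i j)) id' (proj1 Ht _)) as [A|A]; [|exact A].
    exfalso. apply He. split; auto. }
  rewrite HT.
  destruct (dec (Erel i0 i1 t)) as [e01|e01]; destruct (dec (Erel i0 i2 t)) as [e02|e02];
    destruct (dec (Erel i1 i2 t)) as [e12|e12].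
  - exists (Y i0), (Y i0), (Y i0). repeat split; auto. right; right; right; right; right.
    rewrite <- (Yeq _ _ e01), <- (Yeq _ _ e02). reflexivity.
  - exfalso. apply e12. eapply Erel_trans; [apply Erel_sym, e01|exact e02].
  - exfalso. apply e02. eapply Erel_trans; [exact e01|exact e12].
  - exists (Y i0), (Y i2), (Y i0). split; [auto|]. split; [auto|]. split; [auto|].
    right; right; right; right; left. split; [apply Yne; auto|]. split.
    + rewrite <- (Yeq _ _ e01). left; reflexivity.
    + apply Yb; [discriminate|auto].
  - exfalso. apply e01. eapply Erel_trans; [exact e02|apply Erel_sym, e12].
  - exists (Y i0), (Y i1), (Y i0). split; [auto|]. split; [auto|]. split; [auto|].
    right; right; right; right; left. split; [apply Yne; auto|]. split.
    + rewrite <- (Yeq _ _ e02). right; left; reflexivity.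
    + apply Yb; [discriminate|auto].
  - exists (Y i1), (Y i0), (Y i1). split; [auto|]. split; [auto|]. split; [auto|].
    right; right; right; right; left. split.
    + apply Yne. intro E. apply e01, Erel_sym, E.
    + split.
      * rewrite <- (Yeq _ _ e12). right; right; right; right; left; reflexivity.
      * apply Yb; [discriminate|]. intro E. apply e01, Erel_sym, E.
  - exists (Y i0), (Y i1), (Y i2). split; [auto|]. split; [auto|]. split; [auto|].
    right; right; left. split; [apply Yne; auto|]. split; [apply Yne; auto|].
    split; [apply Yne; auto|]. split; [left; reflexivity|].
    split; [apply Yb; [discriminate|auto]|]. split; apply Yb; auto; discriminate.
Qed.

End Final.

Section Final2.
Variable R : WA.
Local Notation V := (I3 -> R).
Local Notation T := (trail R).
Local Notation P := (point R).

Lemma other_two k l : l <> k -> l = nx k \/ l = third k (nx k).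
Proof. destruct k, l; simpl; intuition congruence. Qed.
Lemma nx_ne k : nx k <> k. Proof. destruct k; discriminate. Qed.

Lemma main n : forall p : T, length p <= n -> vtr p -> Goal R (triple R p).
Proof.
  induction n as [|n IH]; intros p Hl Hv.
  { destruct p; simpl in *; [contradiction|lia]. }
  destruct (dec (nobt p)) as [Hn|Hn].
  2:{ destruct (not_nobt R p Hn) as (pre & t & l & s & k & post & ->).
      assert (HT : triple R (pre ++ (t, l) :: (s, l) :: (t, k) :: post) = triple R (pre ++ (t, k) :: post)).
      { unfold triple. rewrite !X_bt by exact Hv. reflexivity. }
      rewrite HT. apply IH.
      - rewrite length_app in *. simpl in *. lia.
      - eapply vtr_bt; exact Hv. }
  destruct p as [|[t k] p0]; [contradiction|].
  destruct p0 as [|y p1]; [apply base_case; exact Hv|].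
  destruct (last2 R ((t, k) :: y :: p1)) as (pre & [a kp] & [t' m] & Ep); [simpl; lia|].
  rewrite Ep in *. clear t k y p1 Ep. rename t' into t. rename kp into k.
  set (p := pre ++ [(a, k); (t, m)]) in *.
  set (p' := pre ++ [(a, k)]).
  assert (Hpp : p = p' ++ [(t, m)]) by (unfold p, p'; rewrite <- app_assoc; reflexivity).
  assert (Hv' : vtr p') by (apply (vtr_app_l R p' [(t, m)]); [unfold p'; destruct pre; discriminate|rewrite <- Hpp; exact Hv]).
  assert (Hl' : length p' <= n) by (unfold p, p' in *; rewrite length_app in *; simpl in *; lia).
  pose proof (Goal_gt R _ (IH p' Hl' Hv')) as G'.
  assert (Xeq : forall j, j <> k -> X R p j = X R p' j).
  { intros j Hj. unfold X. apply cls_eq. apply step_approx; try apply vtr_setptr; auto.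
    unfold p, p'. rewrite setptr_pre2, setptr_last. exact (step2 pre a k t j (not_eq_sym Hj)). }
  assert (Hpair : forall j1 j2, j1 <> k -> j2 <> k -> j1 <> j2 -> good R (X R p j1) (X R p j2)).
  { intros j1 j2 A B C. rewrite !Xeq by auto. apply gt_pair; auto. }
  assert (HU : forall j, inU (X R p j)) by (intro j; apply X_inU; exact Hv).
  destruct (dec (exists l, l <> k /\ Erel k l t)) as [[l [Hlk He]]|HnE].
  -
    assert (XA : X R p k = X R p l).
    { unfold X. apply cls_eq. apply step_approx; try apply vtr_setptr; auto.
      unfold p. rewrite !setptr_pre2.
      pose proof (step3 (pre ++ [(a, k)]) t k l He) as S. rewrite <- !app_assoc in S. exact S. }
    pose proof (perm_triple R p k l (not_eq_sym Hlk)) as Pm. rewrite XA in Pm.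
    assert (Hm1 : third k l <> k) by (apply third_ne1; auto).
    assert (Hm2 : l <> third k l) by (apply not_eq_sym, third_ne2; auto).
    destruct (dec (X R p l = X R p (third k l))) as [Eq|Neq].
    + exists (X R p l), (X R p l), (X R p l). split; [auto|]. split; [auto|]. split; [auto|].
      right; right; right; right; right. apply perm3_same. rewrite Eq in Pm |- *. exact Pm.
    + destruct (Hpair l (third k l) Hlk Hm1 Hm2) as [Eq|[Xp|Bp]]; [contradiction|..].
      * exists (X R p l), (X R p (third k l)), (X R p l). split; [auto|]. split; [auto|]. split; [auto|].
        right; right; right; left. split; [exact Neq|]. split; [exact Pm|exact Xp].
      * exists (X R p l), (X R p (third k l)), (X R p l). split; [auto|]. split; [auto|]. split; [auto|].
        right; right; right; right; left. split; [exact Neq|]. split; [exact Pm|exact Bp].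
  -
    assert (HE : forall l, Erel k l t -> k = l).
    { intros l H. destruct (I3_dec k l) as [E|E]; auto. exfalso. apply HnE. exists l; auto. }
    assert (HA : setptr p k = pre ++ [(a, k); (t, k)]) by apply setptr_pre2.
    assert (Hred : reduced (setptr p k)).
    { rewrite HA. apply reduced_A.
      - rewrite <- HA. apply vtr_setptr; exact Hv.
      - replace (pre ++ [(a, k); (t, k)]) with (p' ++ [(t, k)]) by (unfold p'; rewrite <- app_assoc; reflexivity).
        apply nobt_lastptr with (k := m). rewrite <- Hpp. exact Hn.
      - exact HE. }
    assert (HlenA : length (setptr p k) > 1) by (rewrite HA, length_app; simpl; lia).
    assert (HtrA : is_trail (setptr p k)) by (apply is_trail_vtr, vtr_setptr, Hv).
    assert (NfA := nf_reduced R _ Hred HlenA).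
    assert (Hne : forall j, j <> k -> X R p k <> X R p j).
    { intros j Hj E. rewrite (Xeq j Hj) in E. unfold X at 1 in E. apply cls_inv in E; [|exact HtrA].
      apply nf_approx in E. rewrite NfA in E.
      apply (f_equal (fun x => length (snd (fst x)))) in E. simpl in E.
      pose proof (endnorm_length R (start (setptr p' j)) (red (edges (setptr p' j))) (ptr (setptr p' j))) as L1.
      pose proof (red_length R (edges (setptr p' j))) as L2.
      rewrite edges_length, setptr_length in L2. unfold nf in E.
      rewrite length_rev, edges_length, HA in E. unfold p' in *.
      rewrite !length_app in *. simpl in *. lia. }
    set (l := nx k). set (mu := third k l).
    assert (Hlk : l <> k) by apply nx_ne.
    assert (Hm1 : mu <> k) by (apply third_ne1; auto).
    assert (Hm2 : l <> mu) by (apply not_eq_sym, third_ne2; auto).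
    assert (HXi : Xi_is (X R p k) (X R p l) (X R p mu)).
    { intros x y. split.
      - intros (q & Hq & Eu & Hql & -> & l' & Hlq & ->).
        unfold X in Eu. apply cls_inv in Eu; [|exact HtrA].
        apply nf_approx in Eu. rewrite NfA, (nf_reduced R _ Hq Hql) in Eu.
        inversion Eu as [[Es Ee Ept]].
        assert (Eq : q = setptr p k).
        { apply reconstruct; auto.
          - intros ->; simpl in Hql; lia.
          - rewrite HA. destruct pre; discriminate.
          - rewrite <- (rev_involutive (edges q)), Ee, rev_involutive. reflexivity. }
        subst q. rewrite pointer_ptr in Hlq by (rewrite HA; destruct pre; discriminate).
        rewrite HA, ptr_pre2 in Hlq. simpl in Hlq. rewrite setptr_setptr.
        destruct (other_two k l' Hlq) as [E|E]; [left|right]; split; try reflexivity;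
          unfold X; rewrite E; reflexivity.
      - intros [[-> ->]|[-> ->]]; exists (setptr p k); (split; [exact Hred|]); (split; [reflexivity|]);
          (split; [exact HlenA|]); (split; [reflexivity|]).
        + exists l. split.
          * rewrite pointer_ptr by (rewrite HA; destruct pre; discriminate). rewrite HA, ptr_pre2. simpl. auto.
          * unfold X. rewrite setptr_setptr. reflexivity.
        + exists mu. split.
          * rewrite pointer_ptr by (rewrite HA; destruct pre; discriminate). rewrite HA, ptr_pre2. simpl. auto.
          * unfold X. rewrite setptr_setptr. reflexivity. }
    pose proof (perm_triple R p k l (not_eq_sym Hlk)) as Pm. fold mu in Pm.
    destruct (dec (X R p l = X R p mu)) as [Eq|Neq].
    + exists (X R p l), (X R p k), (X R p l). split; [auto|]. split; [auto|]. split; [auto|].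
      right; right; right; left. split; [apply not_eq_sym, Hne; auto|]. split.
      * rewrite Eq in Pm |- *. apply perm3_sw12, perm3_sw23, perm3_sw12. exact Pm.
      * right. apply (proj2 (HXi _ _)). left; split; reflexivity.
    + destruct (Hpair l mu Hlk Hm1 Hm2) as [Eq|[Xp|Bp]]; [contradiction|..].
      * exists (X R p k), (X R p l), (X R p mu). split; [auto|]. split; [auto|]. split; [auto|].
        left. split; [apply Hne; auto|]. split; [apply Hne; auto|]. split; [exact Neq|].
        split; [exact Pm|]. split; [exact HXi|exact Xp].
      * exists (X R p k), (X R p l), (X R p mu). split; [auto|]. split; [auto|]. split; [auto|].
        right; left. split; [apply Hne; auto|]. split; [apply Hne; auto|]. split; [exact Neq|].
        split; [exact Pm|]. split; [exact HXi|exact Bp].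
Qed.

End Final2.

Theorem lemma9 (R : CAWA) (x : point R * point R * point R) :
  inV x ->
  exists u v w : point R, inU u /\ inU v /\ inU w /\
    ( (* (i) *)
      (u <> v /\ u <> w /\ v <> w /\ perm3 x u v w /\ Xi_is u v w /\ Xi_pair v w)
    \/ (* (ii) *)
      (u <> v /\ u <> w /\ v <> w /\ perm3 x u v w /\ Xi_is u v w /\ base_pair v w)
    \/ (* (iii) *)
      (u <> v /\ u <> w /\ v <> w /\ perm3 x u v w /\
       base_pair u v /\ base_pair u w /\ base_pair v w)
    \/ (* (iv) *)
      (u <> v /\ perm3 x u u v /\ Xi_pair u v)
    \/ (* (v) *)
      (u <> v /\ perm3 x u u v /\ base_pair u v)
    \/ (* (vi) *)
      x = (u, u, u) ).
Proof.
  intros [p [Hp ->]].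
  exact (main R (length p) p (le_n _) (proj1 (is_trail_vtr R p) Hp)).
Qed.
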